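(* Let $K\ge 1$ and, for $k=1,\dots,K$, let $a_k>0$, $b_k>0$, $P_{L,k}>0$, and let $\gamma_{\mathrm{out}}>0$. Let $Z_1,\dots,Z_K$ be independent, with $Z_k$ gamma distributed with shape $a_k$ and scale $b_k$ (the moment-matched gamma approximation described in the context), and for $\bar{\gamma}>0$ set $\gamma_k=\frac{\bar{\gamma}}{P_{L,k}}Z_k^2$, $\gamma^*=\max_k\gamma_k$, and $P_{out}(\bar{\gamma})=\Pr[\gamma^*\le\gamma_{\mathrm{out}}]$. Define $$P_{out}^{\infty}(\bar{\gamma})=\prod_{k=1}^{K}\left(\frac{b_k^2}{\gamma_{\mathrm{out}}\,(a_k!)^{-\frac{2}{a_k}}\,P_{L,k}}\,\bar{\gamma}\right)^{-\frac{a_k}{2}},$$ where $a_k!:=\Gamma(a_k+1)$. Then $P_{out}(\bar{\gamma})$ behaves as $P_{out}^{\infty}(\bar{\gamma})$ as $\bar{\gamma}\to\infty$, i.e. $P_{out}(\bar{\gamma})/P_{out}^{\infty}(\bar{\gamma})\to 1$.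
   Context: Model: there are $K$ reflecting surfaces; surface $k$ has $N_k$ elements with mutually independent amplitudes $\alpha_k^{(i)}$ (Nakagami-$m$, shape $m_{k,1}$, spread $\Omega_{k,1}$) and $\beta_k^{(i)}$ (Nakagami-$m$, shape $m_{k,2}$, spread $\Omega_{k,2}$), and $a_k=N_k\mu_k^2/\sigma_k^2$, $b_k=\sigma_k^2/\mu_k$, where $\mu_k,\sigma_k^2$ are the mean and variance of $\alpha_k^{(1)}\beta_k^{(1)}$; the distribution of $\sum_{i=1}^{N_k}\alpha_k^{(i)}\beta_k^{(i)}$ is approximated by the gamma law with shape $a_k$, scale $b_k$. $P_{L,k}$ is the path loss of path $k$, $\bar{\gamma}$ the average SNR, $\gamma_{\mathrm{out}}$ the outage threshold. *)

(* Defs.v *)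
From HB Require Import structures.
From mathcomp Require Import all_boot all_order all_algebra.
From mathcomp Require Import all_classical all_reals all_analysis.
Set Implicit Arguments. Unset Strict Implicit. Unset Printing Implicit Defensive.
Import Order.TTheory GRing.Theory Num.Def Num.Theory.
Local Open Scope classical_set_scope.
Local Open Scope ring_scope.

Definition GammaF {R : realType} (a : R) : R :=
  Rintegral lebesgue_measure `]0%R, +oo[%classic
            (fun x : R => x `^ (a - 1) * expR (- x)).

Definition gamma_pdf {R : realType} (a b : R) (x : R) : R :=
  if (0 < x) then x `^ (a - 1) * expR (- (x / b)) / (GammaF a * b `^ a) else 0.

Definition gamma_distributed {R : realType} {d : measure_display}
  {T : measurableType d} (P : probability T R) (a b : R) (X : T -> R) : Prop :=
  measurable_fun setT X /\
  forall B : set R, measurable B ->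
    P (X @^-1` B) = (\int[lebesgue_measure]_(x in B) (gamma_pdf a b x)%:E)%E.

Definition mutually_independent {R : realType} {d : measure_display}
  {T : measurableType d} (P : probability T R) (K : nat) (X : 'I_K -> T -> R)
  : Prop :=
  (forall k, measurable_fun setT (X k)) /\
  forall B : 'I_K -> set R, (forall k, measurable (B k)) ->
    P (\bigcap_(k in [set: 'I_K]) (X k @^-1` B k)) =
    (\prod_(k < K) P (X k @^-1` B k))%E.

(* Main.v *)
Require Import Defs.
From HB Require Import structures.
From mathcomp Require Import all_boot all_order all_algebra.
From mathcomp Require Import all_classical all_reals all_analysis.
From mathcomp Require Import measurable_realfun.
From mathcomp.algebra_tactics Require Import ring lra.
Import Order.TTheory GRing.Theory Num.Def Num.Theory.
Import numFieldTopology.Exports numFieldNormedType.Exports.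
Local Open Scope classical_set_scope.
Local Open Scope ring_scope.

Section helpers.
Context {R : realType}.
Notation mu := (@lebesgue_measure R).

Lemma powR_within_cont (p e c : R) : 0 < e ->
  {within `[e, c], continuous (fun x : R => x `^ p)}.
Proof.
move=> e0; apply: derivable_within_continuous => x.
rewrite in_itv /= => /andP[ex _]; apply: derivable_powR.
by rewrite in_itv /= andbT (lt_le_trans e0 ex).
Qed.

Lemma int_pow_cc (a e c : R) : 0 < a -> 0 < e -> e < c ->
  (\int[mu]_(x in `[e, c]) (a * x `^ (a - 1))%:E = (c `^ a - e `^ a)%:E)%E.
Proof.
move=> a0 e0 ec; rewrite EFinB.
apply: (@continuous_FTC2 R (fun x => a * x `^ (a - 1)) (fun x => x `^ a)) => //.
- apply: derivable_within_continuous => x.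
  rewrite in_itv /= => /andP[ex _].
  have hx : x \in `]0, +oo[ by rewrite in_itv /= andbT (lt_le_trans e0 ex).
  have := derivableM (derivable_cst a x 1) (@derivable_powR R 1 (a - 1) x hx).
  by [].
- have /continuous_within_itvP[//|_ H1 H2] := @powR_within_cont a e c e0.
  split => //.
  move=> x; rewrite in_itv /= => /andP[ex _]; apply: derivable_powR.
  by rewrite in_itv /= andbT (lt_trans e0 ex).
- move=> x; rewrite in_itv /= => /andP[ex _]; apply: powR_derive1.
  by rewrite in_itv /= andbT (lt_trans e0 ex).
Qed.


Lemma improper_lim (f : R -> R) (D : set R) (F : nat -> set R) (v : nat -> R) (l : R) :
  measurable D -> (forall n, measurable (F n)) -> nondecreasing_seq F ->
  \bigcup_n F n = D -> measurable_fun D f -> (forall x, D x -> 0 <= f x) ->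
  (\forall n \near \oo, \int[mu]_(x in F n) (f x)%:E = (v n)%:E)%E ->
  v n @[n --> \oo] --> l ->
  (\int[mu]_(x in D) (f x)%:E = l%:E)%E.
Proof.
move=> mD mF ndF UF mf f0 Hn vl.
have FD n : F n `<=` D by rewrite -UF; exact: bigcup_sup.
have mfF i : measurable_fun (F i) (EFin \o f).
  by apply/measurable_EFinP; exact: (measurable_funS mD (FD i)).
have f0F i x : F i x -> (0 <= (f x)%:E)%E by move=> /FD /f0; rewrite lee_fin.
have H : (\int[mu]_(x in F n) (f x)%:E)%E @[n --> \oo] -->
    (\int[mu]_(x in \bigcup_n F n) (f x)%:E)%E.
  apply: ge0_nondecreasing_set_cvg_integral => //.
rewrite UF in H.
have H2 : (\int[mu]_(x in F n) (f x)%:E)%E @[n --> \oo] --> l%:E.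
  have H3 : (v n)%:E @[n --> \oo] --> l%:E.
    by apply: cvg_EFin; [near=> n | exact: vl].
  have Hn' : \forall n \near \oo, (v n)%:E = (\int[mu]_(x in F n) (f x)%:E)%E.
    by apply: filterS Hn => n ->.
  have H4 := near_eq_cvg Hn'.
  exact: (cvg_trans (H4 eventually_filter) H3).
have := cvg_lim _ H; rewrite (cvg_lim _ H2) //.
by move=> ->.
Unshelve. all: by end_near.
Qed.

Lemma int_pow (a c : R) : 0 < a -> 0 < c ->
  (\int[mu]_(x in `]0%R, c]) (a * x `^ (a - 1))%:E = (c `^ a)%:E)%E.
Proof.
move=> a0 c0.
pose e n := c * harmonic n.+1.
have e0 n : 0 < e n by rewrite mulr_gt0 // harmonic_gt0.
have ec n : e n < c.
  rewrite /e /harmonic /= -[ltRHS]mulr1 ltr_pM2l // invf_lt1 // ltr1n //.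
have el : e n @[n --> \oo] --> 0.
  rewrite -(mulr0 c); apply: cvgM; first exact: cvg_cst.
  have := @cvg_harmonic R; rewrite -cvg_shiftS; exact.
apply: (@improper_lim (fun x => a * x `^ (a - 1)) _ (fun n => `[e n, c]%classic) (fun n => c `^ a - e n `^ a)).
- exact: measurable_itv.
- move=> n; exact: measurable_itv.
- move=> n m nm; apply/subsetPset => x; rewrite /= !in_itv /= => /andP[ex xc].
  rewrite xc andbT; apply: le_trans ex.
  rewrite /e ler_pM2l // /harmonic /= lef_pV2 ?posrE // ?ler_nat //.
- apply/seteqP; split => x /=.
  + move=> [n _] /=; rewrite !in_itv /= => /andP[ex ->]; rewrite andbT.
    exact: lt_le_trans (e0 n) ex.
  + rewrite in_itv /= => /andP[x0 xc].
    have cx0 : 0 <= c / x by rewrite divr_ge0 // ltW.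
    exists (archi_bound (c / x)) => //=; rewrite in_itv /= xc andbT.
    have := archi_boundP cx0; set N := archi_bound _ => HN.
    have h1 : c / x < N.+2%:R.
      by apply: (lt_le_trans HN); rewrite ler_nat; exact: leqW (leqnSn N).
    rewrite ltr_pdivrMr // in h1.
    rewrite /e /harmonic /= ler_pdivrMr ?ltr0Sn // mulrC; exact: ltW.
- apply: measurable_funTS.
  apply: measurable_funM; first exact: measurable_cst.
  exact: measurable_powR.
- move=> x _; rewrite mulr_ge0 ?powR_ge0 // ltW //.
- by near=> n; apply: int_pow_cc.
- rewrite -[X in _ --> X]subr0; apply: cvgB; first exact: cvg_cst.
  apply: (proj1 (cvg_at_rightP _ _ _) (powR_cvg0 a0)).
  by split.
Unshelve. all: by end_near.
Qed.


Lemma LRcont_of_der (f : R -> R) (e M : R) : e < M ->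
  (forall x, e <= x <= M -> derivable f x 1) -> derivable_oo_LRcontinuous f e M.
Proof.
move=> eM df.
have wc : {within `[e, M], continuous f}.
  apply: derivable_within_continuous => x; rewrite in_itv /=; exact: df.
have /continuous_within_itvP[//|_ H1 H2] := wc.
split => // x; rewrite in_itv /= => /andP[ex xM]; apply: df.
by rewrite !ltW.
Qed.

Lemma wcont_of_der (f : R -> R) (e M : R) :
  (forall x, e <= x <= M -> derivable f x 1) -> {within `[e, M], continuous f}.
Proof.
move=> df; apply: derivable_within_continuous => x; rewrite in_itv /=; exact: df.
Qed.

Lemma is_derive_expN (x : R) :
  is_derive x 1 (@expR R \o -%R) (expR (- x) * (- 1)).
Proof. by apply: is_derive1_comp. Qed.

Lemma is_derive_mexpN (x : R) :
  is_derive x 1 (fun y : R => - expR (- y)) (expR (- x)).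
Proof.
have h1 := is_derive_expN x.
have h2 := is_deriveN h1.
rewrite mulrN1 opprK in h2.
exact: h2.
Qed.

Lemma der_pow_exp (p x : R) : 0 < x ->
  derivable (fun y : R => y `^ p * expR (- y)) x 1.
Proof.
move=> x0.
have hx : x \in `]0, +oo[ by rewrite in_itv /= andbT.
have h1 := (@derivable_powR R 1 p x hx).
have h2 : derivable (fun y : R => expR (- y)) x 1.
  exact: (@ex_derive _ _ _ _ _ _ _ (is_derive_expN x)).
exact: (derivableM h1 h2).
Qed.


Lemma int_pow_exp_cc (p e M : R) : 0 < e ->
  mu.-integrable `[e, M] (EFin \o (fun x : R => x `^ p * expR (- x))).
Proof.
move=> e0; apply: continuous_compact_integrable; first exact: segment_compact.
apply: wcont_of_der => x /andP[ex _]; apply: der_pow_exp.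
exact: lt_le_trans ex.
Qed.

Lemma gamma_cc (a e M : R) : 0 < a -> 0 < e -> e < M ->
  \int[mu]_(x in `[e, M]) (x `^ a * expR (- x)) =
  (e `^ a * expR (- e) - M `^ a * expR (- M)) +
  a * \int[mu]_(x in `[e, M]) (x `^ (a - 1) * expR (- x)).
Proof.
move=> a0 e0 eM.
have pos x : e <= x -> x \in `]0, +oo[.
  by move=> ex; rewrite in_itv /= andbT (lt_le_trans e0 ex).
rewrite (@Rintegration_by_parts R (fun x => x `^ a) (fun y => - expR (- y))
  (fun x => a * x `^ (a - 1)) (fun y => expR (- y))) //.
  have -> : \int[mu]_(x in `[e, M]) (a * x `^ (a - 1) * - expR (- x)) =
      \int[mu]_(x in `[e, M]) ((- a) * (x `^ (a - 1) * expR (- x))).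
    by apply: eq_Rintegral => x _; rewrite mulrN mulNr mulrA.
  rewrite RintegralZl //; last exact: int_pow_exp_cc.
  rewrite !mulrN opprK mulNr opprK.
  by rewrite (addrC (- _)).
- apply: wcont_of_der => x /andP[ex _].
  exact: (derivableM (derivable_cst a x 1) (@derivable_powR R 1 (a - 1) x (pos x ex))).
- apply: LRcont_of_der => // x /andP[ex _].
  exact: (@derivable_powR R 1 a x (pos x ex)).
- move=> x; rewrite in_itv /= => /andP[ex _]; apply: powR_derive1.
  exact: pos (ltW ex).
- apply: wcont_of_der => x _.
  exact: (@ex_derive _ _ _ _ _ _ _ (is_derive_expN x)).
- by apply: LRcont_of_der.
- move=> x _; rewrite derive1E. have h := is_derive_mexpN x. first [ exact: (derive_val h) | rewrite (derive_val h) // | apply: (@derive_val R R^o R^o) | idtac "FAIL" ].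
Qed.


Lemma meas_pow_exp (p : R) : measurable_fun setT (fun x : R => x `^ p * expR (- x)).
Proof.
apply: measurable_funM; first exact: measurable_powR.
apply: measurableT_comp => //; exact: measurable_expR.
Qed.

Lemma powexp_cvg0 (a : R) : 0 < a ->
  ((n.+1%:R : R) `^ a * expR (- n.+1%:R)) @[n --> \oo] --> 0.
Proof.
move=> a0.
have a0' : 0 <= a := ltW a0.
set k := archi_bound a.
have ak : a < k%:R := archi_boundP a0'.
set F : R := (k.+1)`!%:R.
have F0 : 0 < F by rewrite ltr0n fact_gt0.
apply: (@squeeze_cvgr _ _ _ _ (fun=> 0) (fun n => F * harmonic n)).
- near=> n; apply/andP; split; first by rewrite mulr_ge0 ?powR_ge0 ?expR_ge0.
  set M : R := n.+1%:R.
  have M1 : 1 <= M by rewrite ler1n.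
  have M0 : 0 < M by rewrite ltr0Sn.
  have h1 : M `^ a <= M ^+ k.
    by rewrite -powR_mulrn ?ler0n //; apply: ler_powR => //; exact: ltW.
  have h2 := expR_ge1Dxn k (ltW M0).
  have h3 : M ^+ k.+1 <= expR M * F.
    rewrite -ler_pdivrMr //; apply: le_trans h2; rewrite lerDr //.
  apply: (le_trans (ler_wpM2r (expR_ge0 _) h1)).
  rewrite /harmonic /= -/M expRN ler_pdivrMr ?expR_gt0 // mulrAC ler_pdivlMr // -exprSr mulrC.
  exact: h3.
- exact: cvg_cst.
- rewrite -(mulr0 F); apply: cvgM; first exact: cvg_cst.
  exact: cvg_harmonic.
Unshelve. all: by end_near.
Qed.


Lemma GammaF_rec (a : R) : 0 < a ->
  (\int[mu]_(x in `]0%R, +oo[) (x `^ (a - 1) * expR (- x))%:E)%E \is a fin_num ->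
  GammaF (a + 1) = a * GammaF a.
Proof.
move=> a0 Bfin.
set B := (\int[mu]_(x in _) _)%E in Bfin.
pose e (n : nat) : R := harmonic n.
pose M (n : nat) : R := n.+1%:R.
pose Fs n := `[e n, M n]%classic.
have e0 n : 0 < e n by exact: harmonic_gt0.
have ndF : nondecreasing_seq Fs.
  move=> n m nm; apply/subsetPset => x; rewrite /Fs /= !in_itv /= => /andP[ex xM].
  apply/andP; split.
  - apply: le_trans ex; rewrite /e /harmonic /= lef_pV2 ?posrE // ler_nat.
    by [].
  - by apply: (le_trans xM); rewrite /M ler_nat.
have mF n : measurable (Fs n) by exact: measurable_itv.
have UF : \bigcup_n Fs n = `]0%R, +oo[%classic.
  apply/seteqP; split => x /=.
  - move=> [n _]; rewrite /Fs /= !in_itv /= => /andP[ex _]; rewrite andbT.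
    exact: lt_le_trans (e0 n) ex.
  - rewrite in_itv /= andbT => x0.
    have ix0 : 0 <= x^-1 by rewrite invr_ge0 ltW.
    have := archi_boundP ix0; have := archi_boundP (ltW x0).
    set N1 := archi_bound x^-1; set N2 := archi_bound x => h2 h1.
    exists (N1 + N2)%N => //; rewrite /Fs /= in_itv /=; apply/andP; split.
    + rewrite /e /harmonic /= -[x]invrK lef_pV2 ?posrE ?invr_gt0 //.
      apply: (le_trans (ltW h1)); rewrite ler_nat.
      by rewrite -addnS leq_addr.
    + apply: (le_trans (ltW h2)); rewrite /M ler_nat.
      by apply: leq_trans (leqnSn N2) _; rewrite ltnS leq_addl.
have Hr : (fine (\int[mu]_(x in Fs n) (x `^ (a - 1) * expR (- x))%:E)%E) @[n --> \oo] --> fine B.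
  apply: fine_cvg; rewrite fineK //.
  rewrite /B -UF.
  apply: ge0_nondecreasing_set_cvg_integral => //.
  - move=> n; apply/measurable_EFinP; apply: measurable_funTS; exact: meas_pow_exp.
  - by move=> n x _; rewrite lee_fin mulr_ge0 ?powR_ge0 ?expR_ge0.
have key : (\int[mu]_(x in `]0%R, +oo[) (x `^ a * expR (- x))%:E)%E = (a * fine B)%:E.
  apply: (@improper_lim (fun x => x `^ a * expR (- x)) _ Fs
    (fun n => (e n `^ a * expR (- e n) - M n `^ a * expR (- M n)) +
              a * fine (\int[mu]_(x in Fs n) (x `^ (a - 1) * expR (- x))%:E)%E)).
  - exact: measurable_itv.
  - exact: mF.
  - exact: ndF.
  - exact: UF.
  - apply: measurable_funTS; exact: meas_pow_exp.
  - by move=> x _; rewrite mulr_ge0 ?powR_ge0 ?expR_ge0.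
  - near=> n.
    have eM : e n < M n.
      apply: (@le_lt_trans _ _ 1).
        by rewrite /e /harmonic /= invf_le1 ?ler1n.
      by rewrite /M ltr1n; near: n; exists 1%N.
    rewrite -(@gamma_cc a (e n) (M n) a0 (e0 n) eM).
    rewrite /Rintegral fineK //.
    apply: integrable_fin_num; first exact: measurable_itv.
    exact: int_pow_exp_cc.
  - rewrite -[X in _ --> X]add0r; apply: cvgD; last first.
      apply: cvgM; first exact: cvg_cst.
      exact: Hr.
    rewrite -[X in _ --> X](subr0 0); apply: cvgB; last exact: powexp_cvg0.
    rewrite -[X in _ --> X](mulr1 0); apply: cvgM.
    + apply: (proj1 (cvg_at_rightP _ _ _) (powR_cvg0 a0)); split => //.
      exact: cvg_harmonic.
    + rewrite -expR0 -[X in expR X]oppr0.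
      apply: continuous_cvg; first exact: continuous_expR.
      apply: cvgN; exact: cvg_harmonic.
rewrite /GammaF /Rintegral addrK key /=.
by [].
Unshelve. all: by end_near.
Qed.


Definition Jint (a b c : R) : \bar R :=
  (\int[mu]_(x in `]0%R, c]) (x `^ (a - 1) * expR (- (x / b)))%:E)%E.

Lemma meas_g (a b : R) : measurable_fun setT (fun x : R => x `^ (a - 1) * expR (- (x / b))).
Proof.
apply: measurable_funM; first exact: measurable_powR.
apply: (@measurableT_comp _ _ _ _ _ _ expR _ (fun x : R => - (x / b))).
  exact: measurable_expR.
apply: (measurable_funN (f := fun x : R => x / b)).
exact: measurable_funM.
Qed.

Lemma int_pow' (a c : R) : 0 < a -> 0 < c ->
  (\int[mu]_(x in `]0%R, c]) (x `^ (a - 1))%:E = (c `^ a / a)%:E)%E.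
Proof.
move=> a0 c0; have := @int_pow a c a0 c0.
under eq_integral do rewrite EFinM.
rewrite ge0_integralZl_EFin //; first last.
all: try (by move=> x _; rewrite lee_fin powR_ge0).
all: try (by apply/measurable_EFinP; apply: measurable_funTS; exact: measurable_powR).
all: try (exact: ltW).
have : (0 <= \int[mu]_(x in `]0%R, c]) (x `^ (a - 1))%:E)%E.
  by apply: integral_ge0 => x _; rewrite lee_fin powR_ge0.
case: (\int[mu]_(x in _) _)%E => [r _ | _ | //].
  by move=> [<-]; rewrite mulrC mulKf // gt_eqF.
by rewrite mulry gtr0_sg ?mul1e.

Qed.

Lemma J_lb (a b c : R) : 0 < a -> 0 < b -> 0 < c ->
  ((expR (- (c / b)) * (c `^ a / a))%:E <= Jint a b c)%E.
Proof.
move=> a0 b0 c0.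
have mD : measurable (`]0%R, c] : set R) by exact: measurable_itv.
- rewrite EFinM -int_pow' // -ge0_integralZl_EFin //; first last.
  all: try (by move=> x _; rewrite lee_fin powR_ge0).
  all: try (by apply/measurable_EFinP; apply: measurable_funTS; exact: measurable_powR).
  all: try (exact: expR_ge0).
  apply: ge0_le_integral => //.
  + by move=> x _; rewrite lee_fin mulr_ge0 ?expR_ge0 ?powR_ge0.
  + apply/measurable_EFinP; apply: measurable_funTS.
    apply: measurable_funM => //; exact: measurable_powR.
  + by apply/measurable_EFinP; apply: measurable_funTS; exact: meas_g.
  + move=> x; rewrite /= in_itv /= => /andP[x0 xc].
    rewrite lee_fin mulrC ler_wpM2l ?powR_ge0 // ler_expR lerN2.
    by rewrite ler_pM2r ?invr_gt0.
Qed.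

Lemma J_ub (a b c : R) : 0 < a -> 0 < b -> 0 < c ->
  (Jint a b c <= (c `^ a / a)%:E)%E.
Proof.
move=> a0 b0 c0.
have mD : measurable (`]0%R, c] : set R) by exact: measurable_itv.
rewrite -int_pow' //; apply: ge0_le_integral => //.
- by move=> x _; rewrite lee_fin mulr_ge0 ?expR_ge0 ?powR_ge0.
- by apply/measurable_EFinP; apply: measurable_funTS; exact: meas_g.
- by apply/measurable_EFinP; apply: measurable_funTS; exact: measurable_powR.
- move=> x; rewrite /= in_itv /= => /andP[x0 xc].
  rewrite lee_fin -[leRHS]mulr1 ler_wpM2l ?powR_ge0 // expR_le1 oppr_le0.
  by rewrite divr_ge0 // ltW.
Qed.


Lemma GammaF_ge0 (a : R) : 0 <= GammaF a.
Proof.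
rewrite /GammaF /Rintegral; apply: fine_ge0; apply: integral_ge0 => x _.
by rewrite lee_fin mulr_ge0 ?powR_ge0 ?expR_ge0.
Qed.

Lemma GammaF_neq0 {d : measure_display} {T : measurableType d}
  (P : probability T R) (a b : R) (Z : T -> R) :
  gamma_distributed P a b Z -> GammaF a != 0.
Proof.
move=> [_ HZ]; have := HZ setT measurableT.
rewrite preimage_setT probability_setT => h.
apply/negP => /eqP G0; move: h.
have -> : (fun x => (gamma_pdf a b x)%:E) = (fun=> 0%E).
  apply/funext => x; rewrite /gamma_pdf G0 mul0r invr0 mulr0.
  by case: ifP.
by rewrite integral0 => /eqP; rewrite onee_eq0.
Qed.

Lemma GammaF_fin {d : measure_display} {T : measurableType d}
  (P : probability T R) (a b : R) (Z : T -> R) :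
  gamma_distributed P a b Z ->
  (\int[mu]_(x in `]0%R, +oo[) (x `^ (a - 1) * expR (- x))%:E)%E \is a fin_num.
Proof.
move=> /GammaF_neq0; rewrite /GammaF /Rintegral.
by case: (\int[mu]_(x in _) _)%E => //=; rewrite eqxx.
Qed.

Lemma J_fin (a b c : R) : 0 < a -> 0 < b -> 0 < c -> Jint a b c \is a fin_num.
Proof.
move=> a0 b0 c0.
have J0 : (0 <= Jint a b c)%E.
  by apply: integral_ge0 => x _; rewrite lee_fin mulr_ge0 ?powR_ge0 ?expR_ge0.
rewrite ge0_fin_numE //; apply: le_lt_trans (@J_ub a b c a0 b0 c0) _.
exact: ltry.
Qed.

Lemma prob_itv {d : measure_display} {T : measurableType d}
  (P : probability T R) (a b c : R) (Z : T -> R) :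
  0 < a -> 0 < b -> 0 < c -> gamma_distributed P a b Z ->
  fine (P (Z @^-1` `[- c, c])) = fine (Jint a b c) / (GammaF a * b `^ a).
Proof.
move=> a0 b0 c0 hZ.
have G0 : 0 <= GammaF a := GammaF_ge0 a.
have [_ HZ] := hZ; rewrite HZ; last exact: measurable_itv.
have -> : (\int[mu]_(x in `[(- c)%R, c]) (gamma_pdf a b x)%:E)%E =
          (\int[mu]_(x in `]0%R, c]) (gamma_pdf a b x)%:E)%E.
  rewrite [LHS]integral_mkcond [RHS]integral_mkcond; apply: eq_integral => x _.
  rewrite !patchE.
  case: ifPn => [/set_mem H1 | /negP H1]; case: ifPn => [/set_mem H2 | /negP H2] //.
  - move: H1; rewrite /= in_itv /= => /andP[_ xc].
    have x0 : ~~ (0 < x).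
      by apply/negP => x0; apply: H2; apply: mem_set; rewrite /= in_itv /= x0 xc.
    by rewrite /gamma_pdf (negbTE x0).
  - move: H2; rewrite /= in_itv /= => /andP[x0 xc].
    exfalso; apply: H1; apply: mem_set; rewrite /= in_itv /= xc andbT.
    apply: le_trans (ltW x0); rewrite oppr_le0; exact: ltW.
have -> : (\int[mu]_(x in `]0%R, c]) (gamma_pdf a b x)%:E)%E =
    (\int[mu]_(x in `]0%R, c]) (((GammaF a * b `^ a)^-1)%:E *
        (x `^ (a - 1) * expR (- (x / b)))%:E))%E.
  apply: eq_integral => x; rewrite inE /= in_itv /= => /andP[x0 _].
  by rewrite /gamma_pdf x0 -EFinM mulrC.
rewrite ge0_integralZl_EFin //; last 3 first.
- by move=> x _; rewrite lee_fin mulr_ge0 ?powR_ge0 ?expR_ge0.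
- by apply/measurable_EFinP; apply: measurable_funTS; exact: meas_g.
- by rewrite invr_ge0 mulr_ge0 ?powR_ge0.
rewrite fineM //; last exact: J_fin.
by rewrite mulrC.
Qed.


Lemma powRE' (x r : R) : 0 < x -> x `^ r = expR (r * ln x).
Proof. by move=> x0; rewrite /powR gt_eqF. Qed.

Lemma term_id (a b PL gout g G1 : R) : 0 < a -> 0 < b -> 0 < PL -> 0 < gout ->
  0 < g -> 0 < G1 ->
  (b ^+ 2 / (gout * G1 `^ (- (2 / a)) * PL) * g) `^ (- (a / 2)) =
  (Num.sqrt (gout * PL / g)) `^ a / (G1 * b `^ a).
Proof.
move=> a0 b0 PL0 gout0 g0 G10.
have gP : 0 < gout * PL by rewrite mulr_gt0.
have v0 : 0 < gout * PL / g by rewrite divr_gt0.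
have G1p : 0 < G1 `^ (- (2 / a)) by exact: powR_gt0.
have D0 : 0 < gout * G1 `^ (- (2 / a)) by rewrite mulr_gt0.
have D1 : 0 < gout * G1 `^ (- (2 / a)) * PL by rewrite mulr_gt0.
have b2 : 0 < b ^+ 2 by rewrite exprn_gt0.
have u0 : 0 < b ^+ 2 / (gout * G1 `^ (- (2 / a)) * PL) by rewrite divr_gt0.
have u1 : 0 < b ^+ 2 / (gout * G1 `^ (- (2 / a)) * PL) * g by rewrite mulr_gt0.
rewrite -powR12_sqrt ?ltW // -powRrM.
rewrite (powRE' _ _ u1) (powRE' _ _ v0) (powRE' _ _ b0) -{2}(lnK G10) -expRD -expRB.
congr expR.
rewrite lnM ?posrE // ln_div ?posrE // lnXn // !lnM ?posrE //.
rewrite ln_powR lnV ?posrE ?invr_gt0 //.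
have an0 : a != 0 by rewrite gt_eqF.
field => //. all: by rewrite invr_gt0.
Qed.


Lemma inv_cvg0 : (fun g : R => g^-1) @ +oo --> (0 : R).
Proof.
have h : \forall g \near +oo, 0 < (id : R -> R) g.
  exact: nbhs_pinfty_gt.
exact: (proj2 (gtr0_cvgV0 h) cvg_id).
Qed.

Lemma ratio_cvg {d : measure_display} {T : measurableType d}
  (P : probability T R) (a b PL gout : R) (Z : T -> R) :
  0 < a -> 0 < b -> 0 < PL -> 0 < gout -> gamma_distributed P a b Z ->
  (fine (P (Z @^-1` `[- Num.sqrt (gout * PL / g), Num.sqrt (gout * PL / g)])) /
   (b ^+ 2 / (gout * GammaF (a + 1) `^ (- (2 / a)) * PL) * g) `^ (- (a / 2)))
  @[g --> +oo] --> (1 : R).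
Proof.
move=> a0 b0 PL0 gout0 hZ.
have G0 : 0 < GammaF a by rewrite lt_neqAle eq_sym (@GammaF_neq0 _ _ P a b Z hZ) GammaF_ge0.
have G1E : GammaF (a + 1) = a * GammaF a := @GammaF_rec a a0 (@GammaF_fin _ _ P a b Z hZ).
have G10 : 0 < GammaF (a + 1) by rewrite G1E mulr_gt0.
pose c (g : R) := Num.sqrt (gout * PL / g).
have cl : c g @[g --> +oo] --> 0.
  rewrite -sqrtr0; apply: continuous_cvg; first exact: sqrt_continuous.
  rewrite -(mulr0 (gout * PL)); apply: cvgM; first exact: cvg_cst.
  exact: inv_cvg0.
apply: (@squeeze_cvgr _ _ _ _ (fun g => expR (- (c g / b))) (fun=> 1)).
- have gp : \forall g \near +oo, 0 < (g : R) by exact: nbhs_pinfty_gt.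
  near=> g.
  have g0 : 0 < g by near: g.
  have cg0 : 0 < c g by rewrite /c sqrtr_gt0 divr_gt0 // mulr_gt0.
  have ca0 : 0 < c g `^ a by exact: powR_gt0.
  rewrite (@prob_itv _ _ P a b (c g) Z a0 b0 cg0 hZ) (@term_id a b PL gout g _ a0 b0 PL0 gout0 g0 G10) -/(c g).
  have Jf := @J_fin a b (c g) a0 b0 cg0.
  have -> : fine (Jint a b (c g)) / (GammaF a * b `^ a) /
      (c g `^ a / (GammaF (a + 1) * b `^ a)) = fine (Jint a b (c g)) * a / c g `^ a.
    rewrite G1E; field.
    by rewrite !gt_eqF // ?powR_gt0.
  apply/andP; split.
  + rewrite ler_pdivlMr // -ler_pdivrMr // -mulrA.
    have := @J_lb a b (c g) a0 b0 cg0; rewrite -(fineK Jf) lee_fin.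
    by rewrite fineK.
  + rewrite ler_pdivrMr // mul1r -ler_pdivlMr //.
    have := @J_ub a b (c g) a0 b0 cg0; rewrite -(fineK Jf) lee_fin.
    by rewrite fineK.
- rewrite -expR0 -[X in expR X]oppr0 -(mul0r b^-1).
  apply: continuous_cvg; first exact: continuous_expR.
  apply: cvgN; apply: cvgM; [exact: cl | exact: cvg_cst].
- exact: cvg_cst.
Unshelve. all: by end_near.
Qed.


Lemma fine_prod (I : Type) (s : seq I) (E : I -> \bar R) :
  (forall i, E i \is a fin_num) ->
  (\prod_(i <- s) E i)%E \is a fin_num /\
  fine (\prod_(i <- s) E i)%E = \prod_(i <- s) fine (E i).
Proof.
move=> hE; elim: s => [|x s [IH1 IH2]]; first by rewrite !big_nil.
rewrite !big_cons; split; first exact: fin_numM.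
by rewrite fineM // IH2.
Qed.

Lemma prod_cvg1 (I : Type) (s : seq I) (f : I -> R -> R) :
  (forall i, f i g @[g --> +oo] --> (1 : R)) ->
  (\prod_(i <- s) f i g) @[g --> +oo] --> (1 : R).
Proof.
move=> H; elim: s => [|x s IH].
  by under eq_fun do rewrite big_nil; exact: cvg_cst.
under eq_fun do rewrite big_cons.
have h := cvgM (H x) IH. rewrite mulr1 in h. exact: h.
Qed.

Lemma event_equiv (g PL gout z : R) : 0 < g -> 0 < PL -> 0 < gout ->
  (g / PL * z ^+ 2 <= gout) =
  (z \in `[- Num.sqrt (gout * PL / g), Num.sqrt (gout * PL / g)]).
Proof.
move=> g0 PL0 gout0.
rewrite in_itv /= -ler_norml -sqrtr_sqr ler_sqrt; last first.
  by rewrite divr_ge0 ?mulr_ge0 // ltW.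
rewrite ler_pdivlMr // mulrC mulrA ler_pdivrMr //.
Qed.

End helpers.

Theorem corollary1 {R : realType} {d : measure_display} (T : measurableType d)
  (P : probability T R) (K : nat) (a b PL : 'I_K -> R) (gout : R)
  (Z : 'I_K -> T -> R) :
  (1 <= K)%N ->
  (forall k, 0 < a k) -> (forall k, 0 < b k) -> (forall k, 0 < PL k) ->
  0 < gout ->
  mutually_independent P Z ->
  (forall k, gamma_distributed P (a k) (b k) (Z k)) ->
  let Pout := fun gbar : R =>
    fine (P [set t | \big[Num.max/0]_(k < K) (gbar / PL k * Z k t ^+ 2) <= gout]) in
  let Poutinf := fun gbar : R =>
    \prod_(k < K) ((b k ^+ 2 /
        (gout * GammaF (a k + 1) `^ (- (2 / a k)) * PL k) * gbar)
                   `^ (- (a k / 2))) in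
  (Pout gbar / Poutinf gbar) @[gbar --> +oo] --> (1 : R).
Proof.
move=> K1 a0 b0 PL0 gout0 [mZ indep] hZ Pout Poutinf.
pose c k (g : R) := Num.sqrt (gout * PL k / g).
pose B k g := `[- c k g, c k g]%classic.
pose term k (g : R) := (b k ^+ 2 /
        (gout * GammaF (a k + 1) `^ (- (2 / a k)) * PL k) * g) `^ (- (a k / 2)).
pose r k g := fine (P (Z k @^-1` B k g)) / term k g.
have Hr : (\prod_(k < K) r k g) @[g --> +oo] --> (1 : R).
  apply: prod_cvg1 => k; exact: ratio_cvg.
have mP k g : measurable (Z k @^-1` B k g).
  by rewrite -[_ @^-1` _]setTI; apply: mZ => //; exact: measurable_itv.
have Heq : \forall g \near +oo, \prod_(k < K) r k g = Pout g / Poutinf g.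
  have gp : \forall g \near +oo, 0 < (g : R) by exact: nbhs_pinfty_gt.
  near=> g.
  have g0 : 0 < g by near: g.
  rewrite /r prodf_div /Poutinf -/(term _ _); congr (_ / _).
  rewrite /Pout.
  have -> : [set t | \big[Num.max/0]_(k < K) (g / PL k * Z k t ^+ 2) <= gout] =
      \bigcap_(k in [set: 'I_K]) (Z k @^-1` B k g).
    apply/seteqP; split => t /=.
    - move=> /bigmax_leP [_ H] k _ /=.
      by rewrite /B /c /= -event_equiv //; exact: H.
    - move=> H; apply/bigmax_leP; split; first exact: ltW.
      move=> k _; rewrite event_equiv //; exact: H.
  rewrite (indep (B ^~ g)); last by move=> k; exact: measurable_itv.
  have [_ ->] := fine_prod _ (index_enum 'I_K) (fun k => P (Z k @^-1` B k g))
    (fun k => fin_num_measure P _ (mP k g)).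
  by [].
have H4 := near_eq_cvg Heq.
exact: (cvg_trans (H4 _) Hr).
Unshelve. all: by end_near.
Qed.
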